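(* The zero-error feedback capacity of a finite-state erasure channel with maximal ratio $\tau$ is $C_{0f}=1-\tau$.
   Context: Logarithms are to base $q=|\mathcal{X}|\ge2$, $\mathcal{X}$ the finite input alphabet. Finite-state erasure channel: a strongly connected directed graph $\mathscr{G}=(\mathcal{S},\mathcal{E})$ with finite vertex set $\mathcal{S}$ (channel states) and $\mathcal{E}\subseteq\mathcal{S}\times\mathcal{S}$, each edge labelled $\ell(e)\in\{0,1\}$, distinct edges leaving the same state having distinct labels. A noise word $v(0:n)$ is admissible from initial state $s_0$ if it is the label sequence of a walk starting at $s_0$; output $y(t)=x(t)$ if $v(t)=0$ and $y(t)=*$ (a symbol not in $\mathcal{X}$) if $v(t)=1$. The initial state is arbitrary and unknown. The maximal ratio is $\tau=\max_i e_i/l_i$ over directed simple cycles ($e_i$ = number of edges labelled 1, $l_i$ = length). Zero-error feedback code of block length $n+1$: a finite message set $\mathcal{M}$ and encoding functions $f_t:\mathcal{M}\times(\mathcal{X}\cup\{*\})^t\to\mathcal{X}$, $t=0,\dots,n$, with channel input $x(t)=f_t(m,y(0:t-1))$; it is zero-error if no output word $y(0:n)$ can arise (for any initial state and any admissible noise) from two distinct messages. $C_{0f}=\sup_{n\in\mathbb{N}_0}\sup \log|\mathcal{M}|/(n+1)$ over all zero-error feedback codes of block length $n+1$. *)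

(* Defs.v *)
From Stdlib Require Import Reals.
From mathcomp Require Import all_boot.

Set Implicit Arguments.
Unset Strict Implicit.
Unset Printing Implicit Defensive.

(* A finite-state erasure channel is given by a finite state type S, an edge
   relation E : rel S and an edge labelling lab : S -> S -> bool
   (lab s t is the label of the edge (s,t); only used on edges; true = 1 = erasure). *)

Definition deterministic_labels (S : finType) (E : rel S) (lab : S -> S -> bool) :=
  forall s t1 t2, E s t1 -> E s t2 -> lab s t1 = lab s t2 -> t1 = t2.

Definition strongly_connected (S : finType) (E : rel S) :=
  forall s t, connect E s t.

Fixpoint admissible (S : finType) (E : rel S) (lab : S -> S -> bool)
    (s : S) (v : seq bool) : Prop :=
  match v with
  | [::] => True
  | b :: v' => exists t, E s t /\ lab s t = b /\ admissible E lab t v'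
  end.

Definition simple_cycle (S : finType) (E : rel S) (c : seq S) : Prop :=
  [/\ c != [::], uniq c & cycle E c].

Definition cycle_ones (S : finType) (lab : S -> S -> bool) (c : seq S) : nat :=
  count (fun p => lab p.1 p.2) (zip c (rot 1 c)).

Definition cycle_ratio (S : finType) (lab : S -> S -> bool) (c : seq S) : R :=
  Rdiv (INR (cycle_ones lab c)) (INR (size c)).

Definition is_max_ratio (S : finType) (E : rel S) (lab : S -> S -> bool) (tau : R) : Prop :=
  (exists c, simple_cycle E c /\ cycle_ratio lab c = tau) /\
  (forall c, simple_cycle E c -> Rle (cycle_ratio lab c) tau).

(* Channel run with feedback: erasure symbol * is None.  The family of encoding
   functions f_t (t = 0..n) is represented by one function f on output prefixes;
   f_t is its restriction to prefixes of length t. *)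
Fixpoint run (X M : Type) (f : M -> seq (option X) -> X) (m : M)
    (past : seq (option X)) (v : seq bool) : seq (option X) :=
  match v with
  | [::] => past
  | b :: v' => run f m (rcons past (if b then None else Some (f m past))) v'
  end.

Definition output (X M : Type) (f : M -> seq (option X) -> X) (m : M) (v : seq bool) :=
  run f m [::] v.

Definition zero_error_feedback_code (X S : finType) (E : rel S) (lab : S -> S -> bool)
    (n k : nat) (f : 'I_k -> seq (option X) -> X) : Prop :=
  forall (m1 m2 : 'I_k) (s1 s2 : S) (v1 v2 : seq bool),
    size v1 = n.+1 -> size v2 = n.+1 ->
    admissible E lab s1 v1 -> admissible E lab s2 v2 ->
    output f m1 v1 = output f m2 v2 -> m1 = m2.

Definition feedback_rates (X S : finType) (E : rel S) (lab : S -> S -> bool) (r : R) : Prop :=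
  exists (n k : nat) (f : 'I_k -> seq (option X) -> X),
    (0 < k)%N /\ zero_error_feedback_code E lab n f /\
    r = Rdiv (Rdiv (ln (INR k)) (ln (INR #|X|))) (INR n.+1).

Definition is_zero_error_feedback_capacity (X S : finType) (E : rel S)
    (lab : S -> S -> bool) (C : R) : Prop :=
  is_lub (feedback_rates X E lab) C.

(* Main.v *)
Require Import Defs.
From Stdlib Require Import Reals Lra.
From mathcomp Require Import all_boot zify.
Set Implicit Arguments.
Unset Strict Implicit.

Section Cyc.
Variables (S : finType) (E : rel S) (lab : S -> S -> bool).

Lemma nth_rot1 (x0 : S) (c : seq S) i : i < size c ->
  nth x0 (rot 1 c) i = nth x0 c (i.+1 %% size c).
Proof.
case: c => [|x c'] //= Hi.
rewrite rot1_cons nth_rcons.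
case: (ltnP i (size c')) => H.
  by rewrite modn_small //.
have -> : i = size c' by lia.
by rewrite eqxx modnn.
Qed.

Lemma cycle_nthP (x0 : S) (c : seq S) :
  cycle E c <-> (forall i, i < size c -> E (nth x0 c i) (nth x0 c (i.+1 %% size c))).
Proof.
case: c => [|x c'] //=.
have E1 i : i < (size c').+1 ->
  nth x0 (rcons c' x) i = nth x0 (x :: c') (i.+1 %% (size c').+1).
  by move=> Hi; rewrite -rot1_cons nth_rot1.
have E2 i : i < (size c').+1 -> nth x0 (x :: rcons c' x) i = nth x0 (x :: c') i.
  by move=> Hi; rewrite -rcons_cons nth_rcons /= Hi.
rewrite -cats1; split; [|move=> H].
- move/(pathP x0) => H i Hi.
  have := H i; rewrite size_cat /= addn1 => /(_ Hi).
  by rewrite cats1 E1 // E2.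
- apply/(pathP x0) => i; rewrite size_cat /= addn1 => Hi.
  by rewrite cats1 E1 // E2 //; apply: H.
Qed.

Lemma cycle_ones_sum (x0 : S) (c : seq S) :
  cycle_ones lab c = \sum_(i < size c) lab (nth x0 c i) (nth x0 c (i.+1 %% size c)).
Proof.
rewrite /cycle_ones.
have Hs : size (zip c (rot 1 c)) = size c by rewrite size_zip size_rot minnn.
rewrite -sum1_count big_mkcond /=.
rewrite (big_nth (x0, x0)) Hs big_mkord.
apply: eq_bigr => i _.
rewrite nth_zip ?size_rot // nth_rot1 //; by case: (lab _ _).
Qed.


Lemma admissible_walk s v : admissible E lab s v ->
  exists st : nat -> S, st 0 = s /\ (forall j, j < size v -> E (st j) (st j.+1)) /\
    v = [seq lab (st j) (st j.+1) | j <- iota 0 (size v)].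
Proof.
elim: v s => [|b v IH] s /=.
  by move=> _; exists (fun _ => s).
case=> t [Est [Hb /IH [st [H0 [Hw Hv]]]]].
exists (fun j => if j is j'.+1 then st j' else s); split => //; split.
  by case=> [|j] /= Hj; [rewrite H0 | apply: Hw].
rewrite -Hb -H0 /=; congr (_ :: _).
by rewrite Hv -(addn0 1) iotaDl -map_comp /= size_map size_iota.
Qed.

Lemma walk_admissible (st : nat -> S) N : forall a,
  (forall j, a <= j < a + N -> E (st j) (st j.+1)) ->
  admissible E lab (st a) [seq lab (st j) (st j.+1) | j <- iota a N].
Proof.
elim: N => [|N IH] a H //=.
exists (st a.+1); split; first by apply: H; lia.
split => //; apply: IH => j Hj; apply: H; lia.
Qed.

Lemma count_iota (b : nat -> bool) N :
  count id [seq b j | j <- iota 0 N] = \sum_(0 <= j < N) b j.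
Proof.
rewrite count_map -sumn_count sumnE big_map /index_iota subn0.
by apply: eq_bigr.
Qed.


Lemma walk_bound (l e : nat)
  (Hc : forall c, simple_cycle E c -> cycle_ones lab c * l <= e * size c) N :
  forall st : nat -> S, (forall j, j < N -> E (st j) (st j.+1)) ->
  l * \sum_(0 <= j < N) lab (st j) (st j.+1) <= e * N + l * #|S|.
Proof.
elim: N.+1 {-2}N (ltnSn N) => // M IH {}N HN st Hst.
set f := fun t => nat_of_bool (lab (st t) (st t.+1)).
case: (boolP [exists j : 'I_N.+1, exists i : 'I_j, st i == st j]) => Hex; last first.
  have Hinj : injective (fun j : 'I_N.+1 => st j).
    move=> a b Hab; apply/val_inj/eqP; case: (ltngtP a b) => // Hlt.
    - move/negP: Hex; elim; apply/existsP; exists b; apply/existsP.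
      by exists (Ordinal Hlt); rewrite Hab.
    - move/negP: Hex; elim; apply/existsP; exists a; apply/existsP.
      by exists (Ordinal Hlt); rewrite Hab.
  have := leq_card _ Hinj; rewrite card_ord => HS.
  have Hs : \sum_(0 <= j < N) f j <= N.
    apply: (leq_trans (n := \sum_(0 <= j < N) 1)).
      by apply: leq_sum => j _; rewrite /f; case: (lab _ _).
    by rewrite sum_nat_const_nat subn0 muln1.
  rewrite -/(f _) (_ : \sum_(0 <= j < N) lab (st j) (st j.+1) = \sum_(0 <= j < N) f j) //.
  nia.
have exP : exists j, (j <= N) && [exists i : 'I_j, st i == st j].
  case/existsP: Hex => j Hj; exists j; rewrite -ltnS ltn_ord; exact: Hj.
case: (find_ex_minn exP) => j /andP [HjN /existsP [i /eqP Hij]] Hmin.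
have Hi := ltn_ord i.
set d := j - i.
have Hd : 0 < d by rewrite /d; lia.
have Hinj : forall a b, a < b -> i + b < j -> st (i + a) != st (i + b).
  move=> a b Hab Hb; apply/eqP => Heq.
  have : (i + b <= N) && [exists i0 : 'I_(i + b), st i0 == st (i + b)].
    rewrite (leq_trans (ltnW Hb) HjN) /=; apply/existsP.
    have Hlt : i + a < i + b by lia.
    by exists (Ordinal Hlt); rewrite /= Heq.
  move/Hmin; lia.
set c := mkseq (fun t => st (i + t)) d.
have Hsc : size c = d by rewrite size_mkseq.
have Hnext : forall t, t < d -> nth (st 0) c (t.+1 %% d) = st (i + t).+1.
  move=> t Ht.
  case: (ltngtP t.+1 d) => Ht'.
  - by rewrite modn_small // nth_mkseq // addnS.
  - lia.
  - rewrite Ht' modnn nth_mkseq // addn0 -addnS Ht' /d subnKC; [exact: Hij | lia].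
have Hcyc : simple_cycle E c.
  split.
  - by rewrite -size_eq0 Hsc -lt0n.
  - rewrite map_inj_in_uniq ?iota_uniq // => a b.
    rewrite !mem_iota !add0n => /andP [_ Ha] /andP [_ Hb] Heq.
    case: (ltngtP a b) => // Hab.
    + by move: (Hinj a b Hab ltac:(rewrite /d in Hb; lia)); rewrite Heq eqxx.
    + by move: (Hinj b a Hab ltac:(rewrite /d in Ha; lia)); rewrite Heq eqxx.
  - apply/(cycle_nthP (st 0)) => t Ht; rewrite Hsc in Ht *.
    rewrite Hnext // nth_mkseq //; apply: Hst; rewrite /d in Ht; lia.
have Hones : cycle_ones lab c = \sum_(0 <= t < d) f (i + t).
  rewrite (cycle_ones_sum (st 0)) Hsc big_mkord.
  apply: eq_bigr => t _.
  by rewrite Hnext // nth_mkseq.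
have Hcb := Hc _ Hcyc; rewrite Hones Hsc in Hcb.
set st' := fun t => if t < i then st t else st (t + d).
have Hf' : forall t, lab (st' t) (st' t.+1) = if t < i then lab (st t) (st t.+1) else lab (st (t + d)) (st (t + d).+1).
  move=> t; rewrite /st' /=.
  case: (ltngtP t.+1 i) => Ht.
  - by [].
  - by rewrite addSn.
  - rewrite Ht /d subnKC; [by rewrite -Hij | lia].
have HIH := IH (N - d) ltac:(lia) st'.
have Hst' : forall t, t < N - d -> E (st' t) (st' t.+1).
  move=> t Ht; rewrite /st' /=.
  case: (ltngtP t.+1 i) => Ht'.
  - by apply: Hst; lia.
  - by rewrite addSn; apply: Hst; lia.
  - rewrite Ht' /d subnKC; last lia.
    rewrite -Hij -Ht'; apply: Hst; lia.
have := HIH Hst'.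
rewrite (eq_bigr (fun t => if t < i then f t else f (t + d))); last first.
  by move=> t _; rewrite /f Hf'; case: ifP.
rewrite (big_cat_nat (n := i)) /=; [|lia|lia].
rewrite (@eq_big_nat _ 0 addn 0 i _ f); last first.
  by move=> t /andP [_ ->].
rewrite (@eq_big_nat _ 0 addn i (N - d) _ (fun t => f (t + d))); last first.
  by move=> t /andP [Ht _]; rewrite ltnNge Ht.
rewrite -(big_addn i N d (fun _ => true) f) => HIH'.
rewrite -/(f _) (_ : \sum_(0 <= j0 < N) lab (st j0) (st j0.+1) = \sum_(0 <= j0 < N) f j0) //.
rewrite (big_cat_nat (n := i)) /=; [|lia|lia].
rewrite (big_cat_nat (n := i + d) (m := i)) /=; [|lia|lia].
have -> : \sum_(i <= i0 < i + d) f i0 = \sum_(0 <= t < d) f (i + t).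
  rewrite -{1}(add0n i) big_addn addKn.
  by apply: eq_bigr => t _; rewrite addnC.
nia.
Qed.

End Cyc.

Lemma mkseq_cons T (g : nat -> T) n : mkseq g n.+1 = g 0 :: mkseq (fun t => g t.+1) n.
Proof.
rewrite /mkseq /=; congr (_ :: _).
have := iotaDl 1 0 n; rewrite addn0 => ->.
by rewrite -map_comp.
Qed.

Section Run.
Variables (X M : Type).

Lemma run_shape (f : M -> seq (option X) -> X) m v : forall past,
  map (@isSome X) (run f m past v) = map (@isSome X) past ++ map negb v.
Proof.
elim: v => [|b v IH] past /=; first by rewrite cats0.
by rewrite IH map_rcons -cats1 -catA; case: b.
Qed.

Lemma eq_shape_pmap (o1 o2 : seq (option X)) :
  map (@isSome X) o1 = map (@isSome X) o2 -> pmap id o1 = pmap id o2 -> o1 = o2.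
Proof.
elim: o1 o2 => [|a o1 IH] [|b o2] //= [].
case: a => [a|]; case: b => [b|] //= _ Hs.
  by case=> -> Hp; rewrite (IH _ Hs Hp).
by move=> Hp; rewrite (IH _ Hs Hp).
Qed.

Lemma size_pmap_output (f : M -> seq (option X) -> X) m v :
  size (pmap id (output f m v)) = count negb v.
Proof.
rewrite size_pmap.
have := congr1 (count id) (run_shape f m v [::]).
by rewrite /= count_map /output => ->; rewrite count_map.
Qed.

Lemma run_pmap (x0 : X) (w : M -> seq X) m v : forall past,
  pmap id (run (fun m past => nth x0 (w m) (size (pmap id past))) m past v) =
  pmap id past ++ mkseq (fun t => nth x0 (w m) (size (pmap id past) + t)) (count negb v).
Proof.
elim: v => [|b v IH] past /=; first by rewrite cats0.
rewrite IH -cats1 pmap_cat; case: b => /=.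
  by rewrite cats0.
rewrite size_cat /= addn1 -catA /= mkseq_cons addn0.
congr (_ ++ _ :: _).
by apply: eq_mkseq => t /=; rewrite addSnnS.
Qed.

End Run.

Lemma code_card (X S : finType) (E : rel S) (lab : S -> S -> bool) n k
  (f : 'I_k -> seq (option X) -> X) :
  zero_error_feedback_code E lab n f -> forall s v, size v = n.+1 ->
  admissible E lab s v -> k <= #|X| ^ count negb v.
Proof.
move=> Hz s v Hv Ha.
have P : forall m, size (pmap id (output f m v)) == count negb v.
  by move=> m; rewrite size_pmap_output.
pose g := fun m => Tuple (P m).
have Hinj : injective g.
  move=> m1 m2 /(congr1 val) /= Hp.
  apply: (Hz m1 m2 s s v v) => //.
  apply: eq_shape_pmap => //.
  by rewrite /output !run_shape.
by have := leq_card _ Hinj; rewrite card_ord card_tuple.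
Qed.

Lemma code_exists (X S : finType) (E : rel S) (lab : S -> S -> bool) n L (x0 : X) :
  (forall s v, size v = n.+1 -> admissible E lab s v -> L <= count negb v) ->
  exists f : 'I_(#|X| ^ L) -> seq (option X) -> X, zero_error_feedback_code E lab n f.
Proof.
move=> HL.
pose w := fun m : 'I_(#|X| ^ L) =>
  val (@enum_val _ {: L.-tuple X} (cast_ord (esym (card_tuple L X)) m)).
exists (fun m past => nth x0 (w m) (size (pmap id past))).
move=> m1 m2 s1 s2 v1 v2 H1 H2 A1 A2 Ho.
have key : forall m v, L <= count negb v ->
  take L (pmap id (output (fun m past => nth x0 (w m) (size (pmap id past))) m v)) = w m.
  move=> m v Hc; rewrite /output run_pmap /= /mkseq -map_take take_iota.
  rewrite (minn_idPl Hc).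
  have Hs : size (w m) = L by rewrite size_tuple.
  by rewrite -{2}(mkseq_nth x0 (w m)) Hs.
have := key m1 v1 (HL _ _ H1 A1); rewrite Ho key; last exact: (HL _ _ H2 A2).
move/val_inj/enum_val_inj/cast_ord_inj; done.
Qed.

Lemma sum_periodic (g : nat -> nat) l : (forall i, g (i + l) = g i) ->
  forall j, \sum_(0 <= r < l) g (r + j) = \sum_(0 <= r < l) g r.
Proof.
move=> Hg; elim=> [|j IH]; first by apply: eq_bigr => r _; rewrite addn0.
rewrite -IH; case: l Hg {IH} => [|l] Hg; first by rewrite !big_geq.
rewrite [LHS]big_nat_recr // [RHS]big_nat_recl //= [RHS]addnC.
congr (_ + _).
  by apply: eq_bigr => r _; rewrite addnS addSn.
by rewrite add0n -(Hg j) addnS -addSn addnC.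
Qed.

Lemma cycle_window (S : finType) (E : rel S) (lab : S -> S -> bool) c :
  simple_cycle E c -> forall N, exists s v, size v = N /\ admissible E lab s v /\
  N * cycle_ones lab c <= size c * count id v.
Proof.
case=> Hne Hu Hcyc N.
case: c Hne Hu Hcyc => [|x0 c'] // _ Hu Hcyc.
set c := x0 :: c'.
set l := size c.
have Hl : 0 < l by [].
pose g := fun i => nat_of_bool (lab (nth x0 c (i %% l)) (nth x0 c (i.+1 %% l))).
have HE : forall i, E (nth x0 c (i %% l)) (nth x0 c (i.+1 %% l)).
  move=> i; have := (cycle_nthP E x0 c).1 Hcyc (i %% l) (ltn_mod _ _).
  by rewrite -/l -addn1 modnDml addn1.
have Hg : forall i, g (i + l) = g i.
  by move=> i; rewrite /g modnDr -addSn modnDr.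
have He : cycle_ones lab c = \sum_(0 <= r < l) g r.
  rewrite (cycle_ones_sum lab x0) -/l big_mkord.
  by apply: eq_bigr => [[r Hr]] _; rewrite /g /= (modn_small Hr).
pose ones := fun r => \sum_(0 <= j < N) g (r + j).
have Hsum : \sum_(0 <= r < l) ones r = N * cycle_ones lab c.
  rewrite /ones exchange_big_nat /= He.
  rewrite (eq_bigr (fun j => \sum_(0 <= r < l) g r)); last first.
    by move=> j _; rewrite -(sum_periodic Hg j).
  by rewrite sum_nat_const_nat subn0.
have [r Hr] : exists r, N * cycle_ones lab c <= l * ones r.
  case: (boolP [exists r : 'I_l, N * cycle_ones lab c <= l * ones r]).
    by case/existsP => r Hr; exists r.
  move/existsPn => Hn; exfalso.
  have : \sum_(r < l) (l * ones r + 1) <= \sum_(r < l) (N * cycle_ones lab c).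
    by apply: leq_sum => r _; have := Hn r; rewrite addn1 ltnNge.
  have Hs2 : \sum_(i < l) ones i = N * cycle_ones lab c by rewrite -Hsum big_mkord.
  rewrite big_split /= -big_distrr /= sum_nat_const card_ord Hs2.
  rewrite sum_nat_const card_ord; nia.
pose st := fun j => nth x0 c ((r + j) %% l).
exists (st 0), [seq lab (st j) (st j.+1) | j <- iota 0 N]; split.
  by rewrite size_map size_iota.
split.
  apply: (@walk_admissible S E lab st N 0) => j _.
  by rewrite /st addnS; apply: HE.
rewrite count_iota.
suff -> : \sum_(0 <= j < N) lab (st j) (st j.+1) = ones r by [].
by apply: eq_bigr => j _; rewrite /st addnS.
Qed.

Section Real.
Local Open Scope R_scope.

Lemma INR_muln m n : INR (m * n)%N = (INR m * INR n).
Proof. exact: mult_INR. Qed.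

Lemma INR_addn m n : INR (m + n)%N = (INR m + INR n).
Proof. exact: plus_INR. Qed.

Lemma INR_expn m n : INR (m ^ n)%N = (INR m ^ n).
Proof. elim: n => [|n IH] //; rewrite expnS INR_muln IH /=; lra. Qed.

Lemma INR_leq m n : (m <= n)%N -> (INR m <= INR n).
Proof. by move/leP; apply: le_INR. Qed.

Lemma INR_ltn m n : (m < n)%N -> (INR m < INR n).
Proof. by move/ltP; apply: lt_INR. Qed.

Lemma leq_INR m n : (INR m <= INR n) -> (m <= n)%N.
Proof. by move/INR_le/leP. Qed.

Lemma ln_mono x y : (0 < x) -> (x <= y) -> (ln x <= ln y).
Proof.
move=> Hx Hxy; case: (Rle_lt_or_eq_dec _ _ Hxy) => H.
  by apply: Rlt_le; apply: ln_increasing.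
by rewrite H; apply: Rle_refl.
Qed.

Lemma div_le_aux a N L E z : 0 < N -> 0 < L -> a <= z -> z * L + N * E <= N * L ->
  a / N <= 1 - E / L.
Proof.
move=> HN HL Ha Hz.
apply: (Rmult_le_reg_r (N * L)); first by nra.
have -> : a / N * (N * L) = a * L by field; lra.
have -> : (1 - E / L) * (N * L) = N * L - N * E by field; lra.
nra.
Qed.

Lemma rates_upper (X S : finType) (E : rel S) (lab : S -> S -> bool) c0 :
  simple_cycle E c0 -> (2 <= #|X|)%N ->
  forall r, feedback_rates X E lab r -> r <= 1 - cycle_ratio lab c0.
Proof.
move=> Hc Hq r [n [k [f [Hk [Hz ->]]]]].
have [s [v [Hv [Ha Hw]]]] := cycle_window lab Hc n.+1.
have Hcard := code_card Hz Hv Ha.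
have Hpc := count_predC id v.
have Hneg : count (predC id) v = count negb v by apply: eq_count.
rewrite Hneg Hv in Hpc.
have Hl : (0 < size c0)%N by case: Hc; case: (c0).
have Hnat : (count negb v * size c0 + n.+1 * cycle_ones lab c0 <= n.+1 * size c0)%N.
  nia.
have Hq1 : 1 < INR #|X| by apply: (INR_ltn (m := 1)).
have Hlnq : 0 < ln (INR #|X|) by rewrite -ln_1; apply: ln_increasing; lra.
have Hk0 : 0 < INR k by apply: (INR_ltn (m := 0)).
have Hlnk : ln (INR k) <= INR (count negb v) * ln (INR #|X|).
  rewrite -ln_pow; last lra.
  apply: ln_mono => //; rewrite -INR_expn; exact: INR_leq.
rewrite /cycle_ratio.
apply: (div_le_aux (z := INR (count negb v))).
- exact: (INR_ltn (m := 0)).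
- exact: (INR_ltn (m := 0)).
- apply: (Rmult_le_reg_r (ln (INR #|X|))) => //.
  rewrite /Rdiv Rmult_assoc Rinv_l ?Rmult_1_r //; lra.
- have := INR_leq Hnat; rewrite !INR_addn !INR_muln; rewrite !S_INR; lra.
Qed.

Lemma rates_lower (X S : finType) (E : rel S) (lab : S -> S -> bool) c0 :
  simple_cycle E c0 ->
  (forall c, simple_cycle E c -> cycle_ratio lab c <= cycle_ratio lab c0) ->
  (2 <= #|X|)%N ->
  forall b, is_upper_bound (feedback_rates X E lab) b -> 1 - cycle_ratio lab c0 <= b.
Proof.
move=> Hc0 Hmax Hq b Hub.
set l := size c0; set e := cycle_ones lab c0.
have Hl : (0 < l)%N by case: Hc0; rewrite /l; case: (c0).
have Hel : (e <= l)%N.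
  by rewrite /e /cycle_ones (leq_trans (count_size _ _)) // size_zip size_rot minnn.
have Hcn : forall c, simple_cycle E c -> (cycle_ones lab c * l <= e * size c)%N.
  move=> c Hc; have := Hmax c Hc; rewrite /cycle_ratio -/l -/e => Hr.
  have Hsc : (0 < size c)%N by case: Hc; case: (c).
  have Hsc' : 0 < INR (size c) by apply: (INR_ltn (m := 0)).
  have Hl' : 0 < INR l by apply: (INR_ltn (m := 0)).
  apply: leq_INR; rewrite !INR_muln.
  have H1 : INR (cycle_ones lab c) = INR (cycle_ones lab c) / INR (size c) * INR (size c)
    by field; lra.
  have H2 : INR e = INR e / INR l * INR l by field; lra.
  rewrite H1 H2.
  have := Rmult_le_compat_r (INR (size c) * INR l) _ _ (Rlt_le _ _ (Rmult_lt_0_compat _ _ Hsc' Hl')) Hr.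
  lra.
apply: Rnot_lt_le => Hb.
set S1 := INR #|S| + 1.
have HS1 : 0 < S1 by rewrite /S1; have := pos_INR #|S|; lra.
have [N [HN HN0]] := archimed_cor1 ((1 - cycle_ratio lab c0 - b) / S1)
  ltac:(apply: Rdiv_lt_0_compat => //; lra).
move/ltP: HN0 => HN0.
case: N HN HN0 => [|n] // HN _.
set L := (((l - e) * n.+1) %/ l - #|S|)%N.
have HL : forall s v, size v = n.+1 -> admissible E lab s v -> (L <= count negb v)%N.
  move=> s v Hv Ha.
  have [st [_ [Hst Hvm]]] := admissible_walk Ha.
  have Hpc := count_predC id v.
  have Hneg : count (predC id) v = count negb v by apply: eq_count.
  rewrite Hneg Hv in Hpc.
  have Hones : count id v = \sum_(0 <= j < n.+1) lab (st j) (st j.+1).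
    by rewrite {1}Hvm count_iota Hv.
  rewrite Hv in Hst.
  have Hw := walk_bound Hcn Hst.
  rewrite -Hones in Hw.
  have Hd := leq_divM ((l - e) * n.+1) l.
  rewrite /L; nia.
have [x0 _] : exists x : X, x \in X.
  by apply/card_gt0P; apply: leq_trans Hq.
have [f Hf] := code_exists x0 HL.
have Hfr : feedback_rates X E lab (ln (INR (#|X| ^ L)%N) / ln (INR #|X|) / INR n.+1).
  exists n, (#|X| ^ L)%N, f; split; last by split.
  by rewrite expn_gt0 (leq_trans _ Hq).
have Hrate := Hub _ Hfr.
have Hq1 : 1 < INR #|X| by apply: (INR_ltn (m := 1)).
have Hlnq : 0 < ln (INR #|X|) by rewrite -ln_1; apply: ln_increasing; lra.
rewrite INR_expn ln_pow in Hrate; last lra.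
rewrite (_ : INR L * ln (INR #|X|) / ln (INR #|X|) = INR L) in Hrate; last by field; lra.
have Hceil := ltn_ceil ((l - e) * n.+1) Hl.
have Hnat : (l * n.+1 < (L + #|S| + 1) * l + e * n.+1)%N.
  rewrite /L; nia.
have := INR_ltn Hnat; rewrite !INR_addn !INR_muln => Hr.
have HNp : 0 < INR n.+1 by apply: (INR_ltn (m := 0)).
have Hlp : 0 < INR l by apply: (INR_ltn (m := 0)).
rewrite /cycle_ratio -/l -/e in Hb HN Hrate.
move: Hb HN Hrate Hr; rewrite /S1.
set iN := / INR n.+1.
have HiN : INR n.+1 * iN = 1 by rewrite /iN; field; lra.
have HiN0 : 0 < iN by apply: Rinv_0_lt_compat.
set iL := / INR l.
have HiL : INR l * iL = 1 by rewrite /iL; field; lra.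
have HiL0 : 0 < iL by apply: Rinv_0_lt_compat.
rewrite /Rdiv -/iN -/iL.
set A := INR #|S|.
move=> Hb HN Hrate Hr.
have H1 := Rmult_lt_compat_r (iN * iL) _ _ (Rmult_lt_0_compat _ _ HiN0 HiL0) Hr.
have H2 : INR l * INR n.+1 * (iN * iL) = 1.
  rewrite /iN /iL; field; split; apply: Rgt_not_eq; assumption.
have H3 : (INR L + A + 1) * INR l * (iN * iL) = (INR L + A + 1) * iN.
  rewrite /iN /iL; field; split; apply: Rgt_not_eq; assumption.
have H4 : INR e * INR n.+1 * (iN * iL) = INR e * iL.
  rewrite /iN /iL; field; split; apply: Rgt_not_eq; assumption.
have HL3 : INR (L + #|S| + 1) = INR L + A + 1.
  by rewrite /A !INR_addn.
rewrite Rmult_plus_distr_r H2 HL3 H3 H4 in H1.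
have HA : 0 < A + 1 by rewrite /A; have := pos_INR #|S|; lra.
have H5 := Rmult_lt_compat_r (A + 1) _ _ HA HN.
rewrite Rmult_assoc Rinv_l ?Rmult_1_r in H5; last lra.
nra.
Qed.

End Real.

Theorem theorem3 (X S : finType) (E : rel S) (lab : S -> S -> bool) (tau : R) :
  (2 <= #|X|)%N ->
  strongly_connected E ->
  (exists s t, E s t) ->
  deterministic_labels E lab ->
  is_max_ratio E lab tau ->
  is_zero_error_feedback_capacity X E lab (Rminus 1 tau).
Proof.
move=> Hq _ _ _ [[c0 [Hc0 <-]] Hmax].
split.
- by move=> r Hr; apply: rates_upper Hc0 Hq r Hr.
- by move=> b Hb; apply: rates_lower Hc0 Hmax Hq b Hb.
Qed.
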